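(* For every integer $n \ge 2$ there exists a Sarvate--Beam cube of order $n$, that is, a function $C:[n]^3 \to \mathbb{Z}_{\ge 0}$ (with $[n]=\{1,\dots,n\}$) whose $3n^2$ line sums $$\sum_{i=1}^n C(i,j,k)\ \ (j,k\in[n]),\qquad \sum_{j=1}^n C(i,j,k)\ \ (i,k\in[n]),\qquad \sum_{k=1}^n C(i,j,k)\ \ (i,j\in[n])$$ are, as a multiset, exactly the integers $0,1,2,\dots,3n^2-1$ (each occurring once).
   Context: A line of an $n\times n\times n$ cube is a set of $n$ positions obtained by fixing two of the three coordinates and letting the third range over $[n]$; a line sum is the sum of the entries over a line. There are $3n^2$ lines. *)

(* Defs.v *)
From mathcomp Require Import all_boot.
Set Implicit Arguments. Unset Strict Implicit. Unset Printing Implicit Defensive.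

Definition line_sums1 n (C : 'I_n -> 'I_n -> 'I_n -> nat) : seq nat :=
  [seq \sum_(i < n) C i jk.1 jk.2 | jk <- enum ({: 'I_n * 'I_n})].
Definition line_sums2 n (C : 'I_n -> 'I_n -> 'I_n -> nat) : seq nat :=
  [seq \sum_(j < n) C ik.1 j ik.2 | ik <- enum ({: 'I_n * 'I_n})].
Definition line_sums3 n (C : 'I_n -> 'I_n -> 'I_n -> nat) : seq nat :=
  [seq \sum_(k < n) C ij.1 ij.2 k | ij <- enum ({: 'I_n * 'I_n})].

Definition line_sums n (C : 'I_n -> 'I_n -> 'I_n -> nat) : seq nat :=
  line_sums1 C ++ line_sums2 C ++ line_sums3 C.

Definition sarvate_beam_cube n (C : 'I_n -> 'I_n -> 'I_n -> nat) : Prop :=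
  perm_eq (line_sums C) (iota 0 (3 * n ^ 2)).

(* Main.v *)
Require Import Defs.
From mathcomp Require Import all_boot zify.

Lemma modn_lin x y n : y < n -> x = y \/ x = y + n \/ x = y + n + n -> x %% n = y.
Proof.
move=> yn [->|[->|->]]; first by rewrite modn_small.
  by rewrite modnDr modn_small.
by rewrite !modnDr modn_small.
Qed.

Definition Qf n a b := (a + n - b) %% n.

Lemma bval n a s : a < n -> s < n ->
  (a + n - s) %% n = if s <= a then a - s else a + n - s.
Proof. by move=> an sn; case: (leqP s a) => h; apply: modn_lin; lia. Qed.

Lemma Q1 n a s : a < n -> s < n -> Qf n a ((a + n - s) %% n) = s.
Proof.
move=> an sn; rewrite /Qf (@bval n a s) //.
by case: (leqP s a) => h; apply: modn_lin; lia.
Qed.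

Lemma Q2 n a s : a < n -> s.+1 < n -> Qf n (a.+1 %% n) ((a + n - s) %% n) = s.+1.
Proof.
move=> an sn; rewrite /Qf (@bval n a s) //; last by lia.
have [ha|ha] := ltnP a.+1 n.
  rewrite (@modn_lin a.+1 a.+1 n) //; last by lia.
  by case: (leqP s a) => h; apply: modn_lin; lia.
rewrite (@modn_lin a.+1 0 n); [|lia|lia].
by case: (leqP s a) => h; apply: modn_lin; lia.
Qed.

Lemma Q2' n a : a < n -> 1 < n -> Qf n (a.+1 %% n) ((a + n - n.-1) %% n) = 0.
Proof.
move=> an n1; rewrite /Qf (@bval n a n.-1) //; last by lia.
have [ha|ha] := ltnP a.+1 n.
  rewrite (@modn_lin a.+1 a.+1 n) //; last by lia.
  by case: (leqP n.-1 a) => h; apply: modn_lin; lia.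
rewrite (@modn_lin a.+1 0 n); [|lia|lia].
by case: (leqP n.-1 a) => h; apply: modn_lin; lia.
Qed.

Lemma Q3 n a s : a < n -> 0 < s -> s < n -> Qf n a (((a + n - s) %% n).+1 %% n) = s.-1.
Proof.
move=> an s0 sn; rewrite /Qf (@bval n a s) //.
case: (leqP s a) => h.
  rewrite (@modn_lin (a - s).+1 (a - s).+1 n); [|lia|lia].
  by apply: modn_lin; lia.
have [h2|h2] := ltnP (a + n - s).+1 n.
  rewrite (@modn_lin (a + n - s).+1 (a + n - s).+1 n); [|lia|lia].
  by apply: modn_lin; lia.
rewrite (@modn_lin (a + n - s).+1 0 n); [|lia|lia].
by apply: modn_lin; lia.
Qed.

Lemma Q3' n a : a < n -> Qf n a (((a + n - 0) %% n).+1 %% n) = n.-1.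
Proof.
move=> an; rewrite /Qf (@bval n a 0) //; last by lia.
rewrite leq0n subn0.
have [h3|h3] := ltnP a.+1 n.
  rewrite (@modn_lin a.+1 a.+1 n); [|lia|lia].
  by apply: modn_lin; lia.
rewrite (@modn_lin a.+1 0 n); [|lia|lia].
by apply: modn_lin; lia.
Qed.
Lemma perm_iota_of_cover (s : seq nat) N :
  size s = N -> (forall v, v < N -> v \in s) -> perm_eq s (iota 0 N).
Proof.
move=> hs hc.
have Hu : uniq (iota 0 N) := iota_uniq 0 N.
have sub : {subset iota 0 N <= s}.
  by move=> v; rewrite mem_iota add0n => /andP[_ ]; apply: hc.
have [szs eqs] := uniq_min_size Hu sub (eq_leq (etrans hs (esym (size_iota 0 N)))).
have us : uniq s by rewrite (uniq_size_uniq Hu eqs) szs.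
by apply: uniq_perm => // x; rewrite eqs.
Qed.
Lemma sum_pick n (F : nat -> nat) c r a : a < n -> (a + c) %% n = r ->
  \sum_(i < n) (if (i + c) %% n == r then F i else 0) = F a.
Proof.
move=> an h.
rewrite -big_mkcond /= (big_pred1 (Ordinal an)) //= => i /=.
apply/eqP/eqP => [hi | ->]; last by [].
apply: val_inj => /=.
have : (i + c == a + c %[mod n]) by rewrite hi h.
by rewrite eqn_modDr !modn_small // => /eqP.
Qed.

Lemma ar1 n a b : 0 < n -> (a + (b + (n - (a + b) %% n) %% n)) %% n = 0.
Proof.
move=> n0; rewrite addnA modnDmr -modnDml subnKC ?modnn //.
by rewrite ltnW // ltn_pmod.
Qed.

Definition cube n (P Q : nat -> nat -> nat) (i j k : 'I_n) : nat :=
  (if (i + j + k) %% n == 0 then P i j else 0) +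
  (if (i + j + k) %% n == 1 then Q i j else 0).

Lemma sum_gen n (F G : nat -> nat) c a : 1 < n -> a < n -> (a + c) %% n = 0 ->
 \sum_(i<n) ((if (i + c) %% n == 0 then F i else 0) +
             (if (i + c) %% n == 1 then G i else 0)) = F a + G (a.+1 %% n).
Proof.
move=> n1 an h; have n0 : 0 < n by apply: ltnW.
rewrite big_split /= (@sum_pick _ _ _ _ _ an h); congr (_ + _).
apply: sum_pick; first by rewrite ltn_pmod.
by rewrite modnDml addSn -addn1 -modnDml h add0n modn_small.
Qed.

Section Lines.
Variables (n : nat) (P Q : nat -> nat -> nat).
Hypothesis n1 : 1 < n.
Let n0 : 0 < n. Proof. exact: ltnW. Qed.

Lemma mem_lines a b : a < n -> b < n ->
 [/\ P a b + Q a b \in line_sums (@cube n P Q),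
     P a b + Q (a.+1 %% n) b \in line_sums (@cube n P Q) &
     P a b + Q a (b.+1 %% n) \in line_sums (@cube n P Q)].
Proof.
move=> an bn.
set k := (n - (a + b) %% n) %% n.
have kn : k < n by rewrite ltn_pmod.
have hk := @ar1 n a b n0; rewrite -/k in hk.
rewrite /line_sums !mem_cat; split.
- apply/orP; right; apply/orP; right.
  apply/mapP; exists (Ordinal an, Ordinal bn); first by rewrite mem_enum.
  rewrite /= (eq_bigr (fun i : 'I_n => (if (i + (a + b)) %% n == 0 then (fun _ => P a b) i else 0) +
     (if (i + (a + b)) %% n == 1 then (fun _ => Q a b) i else 0))); last first.
    by move=> i _; rewrite /cube /= (addnC (a + b) i).
  by rewrite (@sum_gen n (fun _ => P a b) (fun _ => Q a b) (a + b) k n1 kn) // addnC -addnA.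
- apply/orP; left.
  apply/mapP; exists (Ordinal bn, Ordinal kn); first by rewrite mem_enum.
  rewrite /= (eq_bigr (fun i : 'I_n => (if (i + (b + k)) %% n == 0 then (fun i => P i b) i else 0) +
     (if (i + (b + k)) %% n == 1 then (fun i => Q i b) i else 0))); last first.
    by move=> i _; rewrite /cube /= addnA.
  by rewrite (@sum_gen n (fun i => P i b) (fun i => Q i b) (b + k) a n1 an).
- apply/orP; right; apply/orP; left.
  apply/mapP; exists (Ordinal an, Ordinal kn); first by rewrite mem_enum.
  rewrite /= (eq_bigr (fun j : 'I_n => (if (j + (a + k)) %% n == 0 then (fun j => P a j) j else 0) +
     (if (j + (a + k)) %% n == 1 then (fun j => Q a j) j else 0))); last first.
    by move=> j _; rewrite /cube /= (addnC a j) addnA.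
  by rewrite (@sum_gen n (fun j => P a j) (fun j => Q a j) (a + k) b n1 bn) // addnCA.
Qed.
End Lines.

Definition covers n (P Q : nat -> nat -> nat) := forall v, v < 3 * n ^ 2 ->
  exists a b, [/\ a < n, b < n & (v = P a b + Q a b \/ v = P a b + Q (a.+1 %% n) b
                                  \/ v = P a b + Q a (b.+1 %% n))].

Lemma sb_of_covers n P Q : 1 < n -> covers n P Q -> sarvate_beam_cube (@cube n P Q).
Proof.
move=> n1 hc; apply: perm_iota_of_cover.
  rewrite /line_sums !size_cat /line_sums1 /line_sums2 /line_sums3 !size_map.
  rewrite -!enumT -!cardT card_prod card_ord; lia.
move=> v /hc [a [b [an bn H]]].
have [h1 h2 h3] := @mem_lines n P Q n1 a b an bn.
by case: H => [->|[->|->]].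
Qed.

Definition Pof n (Pd : nat -> nat -> nat) a b := Pd a (Qf n a b).

Lemma covers_diag n Pd : 1 < n ->
  (forall v, v < 3 * n ^ 2 -> exists a s, [/\ a < n, s < n &
      (v = Pd a s + s \/ (s.+1 < n /\ v = Pd a s + s.+1) \/ (s = n.-1 /\ v = Pd a s) \/
          (0 < s /\ v = Pd a s + s.-1) \/ (s = 0 /\ v = Pd a s + n.-1))]) ->
  covers n (Pof n Pd) (Qf n).
Proof.
move=> n1 H v /H [a [s [an sn hv]]].
have n0 : 0 < n by apply: ltnW.
exists a, ((a + n - s) %% n); split => //; first by rewrite ltn_pmod.
rewrite /Pof Q1 //.
case: hv => [->|[[h ->]|[[h ->]|[[h ->]|[h ->]]]]].
- by left.
- by right; left; rewrite Q2.
- by right; left; rewrite h Q2' // addn0.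
- by right; right; rewrite Q3.
- by right; right; rewrite h Q3'.
Qed.

Definition PdA n a s := n * (n * (s %% 3) + a).

Lemma coverA n : 1 < n -> 3 %| n -> forall v, v < 3 * n ^ 2 -> exists a s, [/\ a < n, s < n &
      (v = PdA n a s + s \/ (s.+1 < n /\ v = PdA n a s + s.+1) \/ (s = n.-1 /\ v = PdA n a s) \/
          (0 < s /\ v = PdA n a s + s.-1) \/ (s = 0 /\ v = PdA n a s + n.-1))].
Proof.
move=> n1 d3 v hv.
have n0 : 0 < n by apply: ltnW.
have n3 : n %% 3 = 0 by apply/eqP.
set r := v %% n; set p := v %/ n; set a := p %% n; set c := p %/ n.
have hv' : v = p * n + r := divn_eq v n.
have hp : p = c * n + a := divn_eq p n.
have rn : r < n by rewrite ltn_pmod.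
have an : a < n by rewrite ltn_pmod.
have pn : p < 3 * n by rewrite ltn_divLR // -mulnA mulnn.
have c3 : c < 3 by rewrite ltn_divLR.
have key : forall s, s %% 3 = c -> PdA n a s = p * n.
  by move=> s hs; rewrite /PdA hs hp; nia.
exists a.
have [h0|h0] := eqVneq c (r %% 3).
  exists r; split => //; left; rewrite key //; lia.
have [h1|h1] := eqVneq c (r.+1 %% 3).
  have [hr|hr] := ltnP r.+1 n.
    exists r.+1; split => //; right; right; right; left; split => //.
    rewrite key //; lia.
  exists 0; split => //; right; right; right; right; split => //.
  rewrite key; lia.
have [hr|hr] := posnP r.
  exists n.-1; split; [lia|lia|]; right; right; left; split => //.
  rewrite key; lia.
exists r.-1; split; [lia|lia|]; right; left; split; first by lia.
rewrite key; lia.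
Qed.

Definition PdB n a s :=
  if s == 0 then 3 * (a * (n.-1 %/ 3).+1) + n.-1 %% 3
  else if s == n.-1 then 3 * (a * (n.-1 %/ 3).+1) + 2 - 2 * (n.-1 %% 3)
  else if s < n.-1 %/ 3 then 3 * (a * (n.-1 %/ 3).+1 + s) + 1 - s
  else 3 * (n * (n.-1 %/ 3).+1 + n * (s - n.-1 %/ 3) + a) + 1 - s.

Lemma PdB0 n a : PdB n a 0 = 3 * (a * (n.-1 %/ 3).+1) + n.-1 %% 3.
Proof. by []. Qed.

Lemma PdBn n a : 1 < n -> PdB n a n.-1 = 3 * (a * (n.-1 %/ 3).+1) + 2 - 2 * (n.-1 %% 3).
Proof. by move=> n1; rewrite /PdB eqxx; case: n n1 => [|[|n]]. Qed.

Lemma PdBlo n a s : 0 < s -> s < n.-1 %/ 3 ->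
  PdB n a s = 3 * (a * (n.-1 %/ 3).+1 + s) + 1 - s.
Proof.
move=> s0 sm; rewrite /PdB sm; case: eqP => [h|_]; first by lia.
by case: eqP => [h|_] //; lia.
Qed.

Lemma PdBhi n a s : 0 < s -> n.-1 %/ 3 <= s -> s < n.-1 ->
  PdB n a s = 3 * (n * (n.-1 %/ 3).+1 + n * (s - n.-1 %/ 3) + a) + 1 - s.
Proof.
move=> s0 sm sn; rewrite /PdB ltnNge sm /=; case: eqP => [h|_]; first by lia.
by case: eqP => [h|_] //; lia.
Qed.

Lemma coverB n : 3 < n -> ~~ (3 %| n) -> forall v, v < 3 * n ^ 2 -> exists a s, [/\ a < n, s < n &
      (v = PdB n a s + s \/ (s.+1 < n /\ v = PdB n a s + s.+1) \/ (s = n.-1 /\ v = PdB n a s) \/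
          (0 < s /\ v = PdB n a s + s.-1) \/ (s = 0 /\ v = PdB n a s + n.-1))].
Proof.
move=> n3 nd3 v hv.
have n1 : 1 < n by apply: ltn_trans n3.
have n0 : 0 < n by apply: ltnW.
have n3' : n %% 3 != 0 by [].
rewrite -mulnn in hv.
have hv3 : v = 3 * (v %/ 3) + v %% 3 by lia.
have r3 : v %% 3 < 3 by lia.
set m := n.-1 %/ 3; set e := n.-1 %% 3.
have hm : n.-1 = m * 3 + e := divn_eq n.-1 3.
have he : e < 2 by lia.
have m1 : 0 < m by lia.
set b := v %/ 3; set r := v %% 3.
have bnn : b < n * n by lia.
have [hb|hb] := ltnP b (n * m.+1).
  set g := b %/ m.+1; set u := b %% m.+1.
  have hbg : b = g * m.+1 + u := divn_eq b m.+1.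
  have gn : g < n by rewrite ltn_divLR.
  have um : u < m.+1 by rewrite ltn_pmod.
  exists g.
  have [u0|u0] := posnP u.
    have [e0|e0] := posnP e.
      have [r0|r0] := posnP r.
        by exists 0; split => //; left; rewrite PdB0; lia.
      have [r1|r1] := eqVneq r 1.
        by exists 0; split => //; right; left; rewrite PdB0; lia.
      by exists n.-1; split; [lia|lia|]; right; right; left; rewrite PdBn //; lia.
    have [r0|r0] := posnP r.
      by exists n.-1; split; [lia|lia|]; right; right; left; rewrite PdBn //; lia.
    have [r1|r1] := eqVneq r 1.
      by exists 0; split => //; left; rewrite PdB0; lia.
    by exists 0; split => //; right; left; rewrite PdB0; lia.
  have [um'|um'] := eqVneq u m.
    have [e0|e0] := posnP e.
      have [r0|r0] := posnP r.
        by exists 0; split => //; right; right; right; right; rewrite PdB0; lia.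
      have [r1|r1] := eqVneq r 1.
        by exists n.-1; split; [lia|lia|]; right; right; right; left; rewrite PdBn //; lia.
      by exists n.-1; split; [lia|lia|]; left; rewrite PdBn //; lia.
    have [r0|r0] := posnP r.
      by exists n.-1; split; [lia|lia|]; right; right; right; left; rewrite PdBn //; lia.
    have [r1|r1] := eqVneq r 1.
      by exists n.-1; split; [lia|lia|]; left; rewrite PdBn //; lia.
    by exists 0; split => //; right; right; right; right; rewrite PdB0; lia.
  have ulo : u < m by lia.
  exists u; split; [lia|lia|].
  rewrite PdBlo //.
  have [r0|r0] := posnP r; first by right; right; right; left; lia.
  have [r1|r1] := eqVneq r 1; first by left; lia.
  by right; left; lia.
set t := b - n * m.+1; set a := t %% n; set q := t %/ n.
have htq : t = q * n + a := divn_eq t n.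
have an : a < n by rewrite ltn_pmod.
have qn : q < n - m.+1.
  by rewrite ltn_divLR // mulnBl (mulnC m.+1 n); lia.
exists a, (m + q); split; [lia|lia|].
rewrite PdBhi; [|lia|lia|lia].
have -> : n * (m + q - m) = q * n by rewrite addKn mulnC.
have [r0|r0] := posnP r; first by right; right; right; left; lia.
have [r1|r1] := eqVneq r 1; first by left; lia.
by right; left; lia.
Qed.

Definition Ptwo a b := nth 0 (nth [::] [:: [:: 0; 5]; [:: 3; 8]] a) b.
Definition Qtwo a b := nth 0 (nth [::] [:: [:: 0; 2]; [:: 1; 3]] a) b.

Lemma cover2 : covers 2 Ptwo Qtwo.
Proof.
move=> v hv.
case: v hv => [|[|[|[|[|[|[|[|[|[|[|[|v]]]]]]]]]]]] hv //.
- by exists 0, 0; split => //; left.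
- by exists 0, 0; split => //; right; left.
- by exists 0, 0; split => //; right; right.
- by exists 1, 0; split => //; right; left.
- by exists 1, 0; split => //; left.
- by exists 0, 1; split => //; right; right.
- by exists 1, 0; split => //; right; right.
- by exists 0, 1; split => //; left.
- by exists 0, 1; split => //; right; left.
- by exists 1, 1; split => //; right; right.
- by exists 1, 1; split => //; right; left.
- by exists 1, 1; split => //; left.
Qed.

Theorem theorem4p1 (n : nat) (hn : 2 <= n) :
  exists C : 'I_n -> 'I_n -> 'I_n -> nat, sarvate_beam_cube C.
Proof.
have [n2|n2] := eqVneq n 2.
  subst n; exists (@cube 2 Ptwo Qtwo); apply: sb_of_covers => //; exact: cover2.
case: (boolP (3 %| n)) => d3.
  exists (@cube n (Pof n (PdA n)) (Qf n)); apply: sb_of_covers => //.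
  by apply: covers_diag => //; apply: coverA.
have n3 : 3 < n.
  by move: d3 n2; case: n hn => [|[|[|[|n]]]].
exists (@cube n (Pof n (PdB n)) (Qf n)); apply: sb_of_covers; first by apply: ltn_trans n3.
apply: covers_diag; first by apply: ltn_trans n3.
exact: coverB.
Qed.
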